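(* In the distributed leader election algorithm (described in the context) with parameter $X>1$, while a fragment is in the work state, the number of messages sent in the fragment is at most $3k$, where $k$ is the number of nodes within the fragment.
   Context: Model: the network is a finite connected undirected graph $G=(V,E)$ with $n=|V|$ nodes having distinct identity numbers; each node knows its number of neighbors. When a node transmits a message it is received by all of its neighbors (and only them), without errors and in the order of transmission; one transmission counts as one message regardless of the number of receivers. Fragment identities: a fragment $F$ (set of nodes supporting a candidate node) has identity $id(F)=(size, identity)$ (recorded size, candidate's identity number), compared lexicographically (first by size, then by identity). Distributed algorithm with parameter $X>1$: within a fragment, information is spread by fragment-PIF cycles: a source node (normally the candidate) broadcasts an INFO message carrying the fragment's current identity; every node of the fragment, upon first receiving its fragment's INFO, records the sender as its parent and rebroadcasts it once; a node that hears broadcasts from nodes of other fragments records the largest such fragment identity. A node that has received a broadcast from all its neighbors and a FEEDBACK message from all its children in the fragment sends one FEEDBACK message to its parent, containing the number of fragment nodes in its subtree and the largest neighboring-fragment identity known in that subtree. When the candidate has received broadcasts from all its neighbors and FEEDBACK from all its children, it compares the counted size new\_size with the size $s'$ of the maximal neighboring fragment: if new\_size $> X s'$ the fragment stays active, updates its size and the candidate broadcasts a new INFO; otherwise the candidate sends an ACTION message along a recorded path to an edge node adjacent to that maximal neighboring fragment, which broadcasts an INFO carrying the joined fragment's identity; the nodes of the old fragment propagate it and thereby join that fragment. A candidate that learns that its fragment has no neighboring fragment becomes the leader. The work state of a fragment is the phase consisting of the FEEDBACK collection, the candidate's decision, and the subsequent ACTION and INFO propagation through the fragment. *)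

(* Defs.v *)
From mathcomp Require Import all_boot all_order all_algebra.
Set Implicit Arguments. Unset Strict Implicit. Unset Printing Implicit Defensive.
Import Order.TTheory GRing.Theory Num.Theory.

(* fragment identity: (recorded size, candidate's identity number) *)
Definition fid := (nat * nat)%type.

Definition fid_lt (a b : fid) : bool :=
  (a.1 < b.1) || ((a.1 == b.1) && (a.2 < b.2)).

(* maximum of two optional identities (None = no neighbouring fragment known) *)
Definition omax_fid (a b : option fid) : option fid :=
  match a, b with
  | None, _ => b
  | _, None => a
  | Some x, Some y => if fid_lt x y then Some y else Some x
  end.

(* Feedback d n b : FEEDBACK addressed to d, with subtree count n and the
                    largest neighbouring-fragment identity b of the subtree.
   Action d       : ACTION addressed to d. *)
Inductive msg (V : Type) : Type :=
| Feedback of V & nat & option fid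
| Action of V
| Info of fid.
Arguments Feedback {V}.
Arguments Action {V}.
Arguments Info {V}.

Definition is_feedback V (m : msg V) : bool :=
  if m is Feedback _ _ _ then true else false.
Definition is_action V (m : msg V) : bool :=
  if m is Action _ then true else false.
Definition is_info V (m : msg V) : bool :=
  if m is Info _ then true else false.

(* Global configuration: the list of all transmissions so far (sender,
   message) in order, and for each ordered pair (v,u) the number of messages
   of u already received by v (broadcasts are delivered in order, without
   errors, to every neighbour). *)
Record config (V : Type) := Config {
  hist : seq (V * msg V);
  rcvd : V -> V -> nat }.

Section WorkState.
Variables (R : realFieldType) (X : R) (V : finType) (adj : rel V)
  (F : {set V}) (cand : V) (par : V -> V) (ident : V -> nat)
  (nbf : V -> option fid).
(* adj   : the graph
   F     : the fragment, cand its candidate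
   par   : parent pointers recorded in the fragment's INFO broadcast
   ident : identity numbers
   nbf v : largest neighbouring-fragment identity recorded by v from the
           broadcasts of its neighbours (None if none) *)

Definition sent_by (h : seq (V * msg V)) (u : V) : seq (msg V) :=
  [seq e.2 | e <- h & e.1 == u].

Definition received (s : config V) (v u : V) : seq (msg V) :=
  take (rcvd s v u) (sent_by (hist s) u).

Definition has_sent (s : config V) (v : V) (P : pred (msg V)) : bool :=
  has P (sent_by (hist s) v).

Definition children (v : V) : seq V :=
  [seq w <- enum V | (w \in F) && (w != cand) && (par w == v)].

Definition fb_to (v : V) (m : msg V) : option (nat * option fid) :=
  if m is Feedback d n b then (if d == v then Some (n, b) else None) else None.

Definition fb_from (s : config V) (v w : V) : option (nat * option fid) :=
  ohead (pmap (fb_to v) (received s v w)).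

Definition fb_dflt : nat * option fid := (0%N, None).

Definition all_fb (s : config V) (v : V) : bool :=
  all (fun w => fb_from s v w != None) (children v).

Definition sub_count (s : config V) (v : V) : nat :=
  (sumn [seq (odflt fb_dflt (fb_from s v w)).1 | w <- children v]).+1.

Definition sub_best (s : config V) (v : V) : option fid :=
  foldr omax_fid (nbf v) [seq (odflt fb_dflt (fb_from s v w)).2 | w <- children v].

Definition decided_active (s : config V) : bool :=
  all_fb s cand &&
  (if sub_best s cand is Some i then (X * (i.1)%:R < (sub_count s cand)%:R)%R
   else false).

Definition decided_join (s : config V) : bool :=
  all_fb s cand &&
  (if sub_best s cand is Some i then ~~ (X * (i.1)%:R < (sub_count s cand)%:R)%R
   else false).

Definition action_to (v : V) (m : msg V) : bool :=
  if m is Action d then d == v else false.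

Definition on_path (s : config V) (v : V) : bool :=
  if v == cand then decided_join s
  else has (action_to v) (received s v (par v)).

Definition info_is (i : fid) (m : msg V) : bool :=
  if m is Info j then j == i else false.

Definition allowed (s : config V) (v : V) (m : msg V) : Prop :=
  v \in F /\
  match m with
  | Feedback d n b =>
      [/\ v != cand, ~~ has_sent s v (@is_feedback V), all_fb s v
        & [/\ d = par v, n = sub_count s v & b = sub_best s v]]
  | Action d =>
      [/\ on_path s v, sub_best s v != nbf v,
          ~~ has_sent s v (@is_action V), d \in children v
        & omap snd (fb_from s v d) = Some (sub_best s v)]
  | Info i =>
      ~~ has_sent s v (@is_info V) /\
      [\/ [/\ v = cand, decided_active s & i = (sub_count s cand, ident cand)],
          [/\ on_path s v, sub_best s v = nbf v & sub_best s v = Some i]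
        | (exists u, [/\ u \in F, adj u v & has (info_is i) (received s v u)])]
  end.

Inductive ws_step : config V -> config V -> Prop :=
| StepDeliver (s : config V) (u v : V) :
    adj u v -> rcvd s v u < size (sent_by (hist s) u) ->
    ws_step s (Config (hist s)
      (fun x y => if (x == v) && (y == u) then (rcvd s x y).+1 else rcvd s x y))
| StepSend (s : config V) (v : V) (m : msg V) :
    allowed s v m -> ws_step s (Config (rcons (hist s) (v, m)) (rcvd s)).

Definition ws_init : config V := Config [::] (fun _ _ => 0%N).

Inductive ws_reachable : config V -> Prop :=
| RInit : ws_reachable ws_init
| RStep (s s' : config V) : ws_reachable s -> ws_step s s' -> ws_reachable s'.

End WorkState.

(* Main.v *)
Require Import Defs.
From mathcomp Require Import all_boot all_order all_algebra.
From mathcomp Require Import zify.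

Lemma sent_by_rcons (V : finType) (h : seq (V * msg V)) v m u :
  sent_by (rcons h (v,m)) u = if v == u then rcons (sent_by h u) m else sent_by h u.
Proof.
rewrite /sent_by filter_rcons /=; case: (v == u) => //; by rewrite map_rcons.
Qed.

Lemma size_counts (V : Type) (s : seq (msg V)) :
  size s = count (@is_feedback V) s + count (@is_action V) s + count (@is_info V) s.
Proof.
elim: s => [|[d n b|d|i] s IH] //=; rewrite IH; lia.
Qed.

Theorem lemma5 (R : realFieldType) (X : R) (V : finType) (adj : rel V)
  (F : {set V}) (cand : V) (par : V -> V) (ident : V -> nat)
  (nbf : V -> option fid) :
  (1 < X)%R ->
  symmetric adj -> irreflexive adj -> (forall u v, connect adj u v) ->
  injective ident ->
  cand \in F ->
  (forall v, v \in F -> v != cand -> par v \in F /\ adj v (par v)) ->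
  (forall v, v \in F -> exists n, iter n par v = cand) ->
  forall s : config V, ws_reachable X adj F cand par ident nbf s ->
  size (hist s) <= 3 * #|F|.
Proof.
move=> _ _ _ _ _ _ _ _ s Hs.
have inv : (forall v, [/\ count (@is_feedback V) (sent_by (hist s) v) <= 1,
                          count (@is_action V) (sent_by (hist s) v) <= 1 &
                          count (@is_info V) (sent_by (hist s) v) <= 1]) /\
           size (hist s) = \sum_(v in F) size (sent_by (hist s) v).
  elim: Hs => [|s1 s2 _ [IH1 IH2] st].
    split => [v|]; first by [].
    by rewrite /= big1.
  case: s1 s2 / st IH1 IH2 => [s0 u0 v0 _ _ | s0 v m [vF Hm]] IH1 IH2 /=.
    by split.
  split.
    move=> w; rewrite sent_by_rcons; case: eqP => [<-|_]; last exact: IH1.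
    have [a b c] := IH1 v.
    rewrite -!cats1 !count_cat /=.
    case: m Hm => [d n b'|d|i] /=.
    - case=> _ H _ _; move: H; rewrite /has_sent has_count -leqNgt leqn0 => /eqP ->.
      by split; rewrite //= ?addn0.
    - case=> _ _ H _ _; move: H; rewrite /has_sent has_count -leqNgt leqn0 => /eqP ->.
      by split; rewrite //= ?addn0.
    - case=> H _; move: H; rewrite /has_sent has_count -leqNgt leqn0 => /eqP ->.
      by split; rewrite //= ?addn0.
  rewrite size_rcons IH2.
  rewrite [RHS](eq_bigr (fun u => size (sent_by (hist s0) u) + (v == u))); last first.
    by move=> u _; rewrite sent_by_rcons; case: eqP => _; rewrite ?size_rcons ?addn1 ?addn0.
  rewrite big_split /= [\sum_(i in F) (v == i)](bigD1 v) //= eqxx [\sum_(i in F | i != v) (v == i)]big1 ?addn0 ?addn1 //.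
  by move=> u /andP[_ /negbTE]; rewrite eq_sym => ->.
case: inv => H1 ->.
apply: (@leq_trans (\sum_(v in F) 3)).
  apply: leq_sum => v _.
  by move: (H1 v) => [a b c]; rewrite size_counts; lia.
by rewrite sum_nat_const mulnC.
Qed.
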